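(* Let $\mathbb K\in\{\mathbb R,\mathbb C\}$ and fix a family of Taylor sheaves. Let $M_1,M_2,B\in\widehat{\mathcal V}$ be prevarieties and let $\varphi_1:M_1\to B$, $\varphi_2:M_2\to B$ be smooth maps. Then: (i) the diagonal $\Delta_B=\{(p,p)\mid p\in B\}$ is locally closed in $B\times B$ (with its $\widehat{\mathcal V}$-product structure); (ii) if $B$ is a locally closed subset of a finite-dimensional $\mathbb K$-linear space $V$ endowed with the structure induced from $(V,\mathcal F^V)$, then $\Delta_B$ is closed in $B\times B$; (iii) there exists a fibre product $\widehat{\mathcal V}$-structure on $M_1\times_B M_2$.
   Context: A space with a sheaf of $\mathbb K$-valued functions is a topological space $M$ together with, for each open $U\subset M$, a $\mathbb K$-algebra $\mathcal F(U)$ of functions $U\to\mathbb K$ (containing constants), closed under restriction to smaller open sets and such that a function that is locally in $\mathcal F$ is in $\mathcal F$. Germs, stalks $\mathcal F_p$ and the ideal $\mathfrak m_p$ of germs vanishing at $p$ are as usual; the sheaf is local if every germ not in $\mathfrak m_p$ is invertible in $\mathcal F_p$. A continuous map $\psi$ between such spaces is smooth if composing with $\psi$ sends local functions of the target sheaf to functions of the source sheaf. The induced structure on a subset $S\subset M$ is the subspace topology with the sheaf of functions locally equal to restrictions of functions in $\mathcal F$. Taylor sheaves: every finite-dimensional $\mathbb K$-linear space $V$ carries a topology and a local sheaf $\mathcal F^V$ such that (1) the topology is the weakest making all of $\mathcal F^V(V)$ continuous; (2) $V^*\subset\mathcal F^V(V)$; (3) for open $U\subset V$, a map $\psi:U\to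 W$ into a finite-dimensional space $W$ is smooth iff $\varphi\circ\psi\in\mathcal F^V(U)$ for all $\varphi\in W^*$; (4) for $p\in V$ the map $V^*\to\mathfrak m_p/\mathfrak m_p^2$, $\varphi\mapsto(\varphi-\varphi(p))_p$, is an isomorphism (giving for $f\in\mathcal F^V(U)$ a unique $df_p\in V^*$ with $f_p-f(p)-(df_p-df_p(p))_p\in\mathfrak m_p^2$); (5) for $f\in\mathcal F^V(U)$, $(p,v)\mapsto df_p(v)$ lies in $\mathcal F^{V\oplus V}(U\times V)$. A prevariety is a space with a sheaf that has a countable or finite open cover by pieces each isomorphic to a locally closed subset of a finite-dimensional $\mathbb K$-linear space $V$ with the structure induced from $\mathcal F^V$; $\widehat{\mathcal V}$ is the class of prevarieties. A $\widehat{\mathcal V}$-product structure on $M_1\times M_2$ (for $M_1,M_2\in\widehat{\mathcal V}$) is a prevariety structure with smooth projections such that for every $M\in\widehat{\mathcal V}$ and smooth $\psi_i:M\to M_i$ the map $(\psi_1,\psi_2):M\to M_1\times M_2$ is smooth (such a structure exists and is unique). Given smooth $\varphi_i:M_i\to B$ ($i=1,2$), set $M_1\times_BM_2=\{(p_1,p_2)\in M_1\times M_2\mid \varphi_1(p_1)=\varphi_2(p_2)\}$ with projections $\pi_i$. A fibre product $\widehat{\mathcal V}$-structure on $M_1\times_BM_2$ is a prevariety structure such that $\pi_1,\pi_2$ are smooth and, for every $M\in\widehat{\mathcal V}$ and smooth maps $\psi_i:M\to M_i$ with $\varphi_1\circ\psi_1=\varphi_2\circ\psi_2$, the map $(\psi_1,\psi_2):M\to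 M_1\times_BM_2$ is smooth. *)

(* Defs.v *)
From mathcomp Require Import all_boot all_algebra.
From mathcomp Require Import all_classical all_reals all_analysis.
From mathcomp Require Import complex.
Import GRing.Theory Num.Theory.
Import numFieldNormedType.Exports.

Set Implicit Arguments.
Unset Strict Implicit.
Unset Printing Implicit Defensive.

Local Open Scope ring_scope.
Local Open Scope classical_set_scope.

(* K carries its standard (norm) topology,
   through mathcomp-analysis' [open] on a numFieldType. *)
Definition Kfield (R : realType) (b : bool) : numFieldType :=
  if b then (R : numFieldType) else (R[i] : numFieldType).

Section Spaces.
Variable K : numFieldType.

(* A (raw) kspace with K-valued functions: a carrier, a family of open sets and,
   for each set U, the functions "U -> K" in F(U), represented as total
   functions car -> K (only their values on U matter, see [is_sheaf]). *)
Record kspace := Space {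
  car : Type;
  opn : set (set car);
  fns : set car -> set (car -> K) }.
Arguments car : clear implicits.
Arguments opn : clear implicits.
Arguments fns : clear implicits.

Definition is_topology (T : Type) (o : set (set T)) : Prop :=
  o setT /\
  (forall S : set (set T), S `<=` o -> o (\bigcup_(A in S) A)) /\
  (forall A B, o A -> o B -> o (A `&` B)).

Definition is_sheaf (X : kspace) : Prop :=
  is_topology (opn X) /\
  forall U, opn X U ->
    (* F(U) is a set of functions U -> K *)
    (forall f g, fns X U f -> (forall x, U x -> f x = g x) -> fns X U g) /\
    (forall c : K, fns X U (fun _ => c)) /\
    (forall f g, fns X U f -> fns X U g ->
       fns X U (fun x => f x + g x) /\ fns X U (fun x => f x * g x)) /\
    (forall (c : K) f, fns X U f -> fns X U (fun x => c * f x)) /\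
    (forall U', opn X U' -> U' `<=` U -> forall f, fns X U f -> fns X U' f) /\
    (forall f, (forall p, U p -> exists W, opn X W /\ W p /\ W `<=` U /\ fns X W f) ->
       fns X U f).

Definition is_local (X : kspace) : Prop :=
  forall U f p, opn X U -> fns X U f -> U p -> f p != 0 ->
    exists W g, [/\ opn X W, W p, W `<=` U, fns X W g &
                    forall x, W x -> f x * g x = 1].

Definition in_mp2 (X : kspace) (p : car X) (f : car X -> K) : Prop :=
  exists (W : set (car X)) (n : nat) (g h : 'I_n -> car X -> K),
    [/\ opn X W, W p,
        (forall i, [/\ fns X W (g i), fns X W (h i), g i p = 0 & h i p = 0]) &
        forall x, W x -> f x = \sum_(i < n) g i x * h i x].
Arguments in_mp2 : clear implicits.

Definition cont_into (T : Type) (o : set (set T)) (f : T -> K) : Prop :=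
  forall O : set K, open O -> o (f @^-1` O).

Definition smooth (X Y : kspace) (psi : car X -> car Y) : Prop :=
  (forall O, opn Y O -> opn X (psi @^-1` O)) /\
  (forall O g, opn Y O -> fns Y O g -> fns X (psi @^-1` O) (fun x => g (psi x))).
Arguments smooth : clear implicits.

Definition iso (X Y : kspace) : Prop :=
  exists (h : car X -> car Y) (g : car Y -> car X),
    [/\ smooth X Y h, smooth Y X g, cancel h g & cancel g h].

Definition induced_on (X : kspace) (S : set (car X)) : kspace :=
  @Space (sig S)
    (fun A => exists O, opn X O /\ A = (fun x => O (proj1_sig x)))
    (fun U g => forall p, U p ->
       exists O f, [/\ opn X O, O (proj1_sig p), fns X O f &
                       forall x, U x -> O (proj1_sig x) -> g x = f (proj1_sig x)]).
Arguments induced_on : clear implicits.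

Definition closed_in (T : Type) (o : set (set T)) (A : set T) : Prop := o (~` A).

Definition locally_closed (T : Type) (o : set (set T)) (A : set T) : Prop :=
  exists O C, [/\ o O, closed_in o C & A = O `&` C].

Definition lin_fun (V : vectType K) (phi : V -> K) : Prop :=
  forall (a : K) (u v : V), phi (a *: u + v) = a * phi u + phi v.

Record taylor := Taylor {
  t_opn : forall V : vectType K, set (set V);
  t_fns : forall V : vectType K, set V -> set (V -> K) }.
Arguments t_opn : clear implicits.
Arguments t_fns : clear implicits.

Definition tspace (T : taylor) (V : vectType K) : kspace :=
  @Space V (t_opn T V) (t_fns T V).

Definition is_taylor (T : taylor) : Prop :=
  forall V : vectType K,
  let X := tspace T V in
  [/\ is_sheaf X /\ is_local X,
   (* (1) weakest topology making all of F^V(V) continuous *)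
   (forall f, fns X setT f -> cont_into (opn X) f) /\
   (forall tau : set (set V), is_topology tau ->
      (forall f, fns X setT f -> cont_into tau f) -> opn X `<=` tau),
   (forall phi : V -> K, lin_fun phi -> fns X setT phi),
   (forall (W : vectType K) (U : set V) (psi : V -> W), opn X U ->
      (smooth (induced_on X U) (tspace T W) (fun x => psi (proj1_sig x)) <->
       forall phi : W -> K, lin_fun phi -> fns X U (fun x => phi (psi x)))) &
   (* (4) V^* -> m_p / m_p^2 is an isomorphism *)
   (forall p : V,
      (forall phi : V -> K, lin_fun phi ->
         in_mp2 X p (fun x => phi x - phi p) -> forall v, phi v = 0) /\
      (forall U f, opn X U -> U p -> fns X U f -> f p = 0 ->
         exists phi : V -> K, lin_fun phi /\
           in_mp2 X p (fun x => f x - (phi x - phi p))))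
   /\
   (* (5) (p, v) |-> df_p(v) lies in F^{V (+) V}(U x V); here D(p, .) = df_p is
      the unique element of V^* with f_p - f(p) - (df_p - df_p(p))_p in m_p^2 *)
   (forall U f, opn X U -> fns X U f ->
      exists D : (V * V)%type -> K,
        fns (tspace T (V * V)%type) (U `*` setT) D /\
        forall p, U p -> lin_fun (fun v => D (p, v)) /\
          in_mp2 X p (fun x => f x - f p - (D (p, x) - D (p, p))))].

(* prevarieties: countable-or-finite open cover by pieces isomorphic to
   locally closed subsets of finite-dimensional spaces *)
Definition prevariety (T : taylor) (X : kspace) : Prop :=
  is_sheaf X /\
  exists (I : Type) (enc : I -> nat) (U : I -> set (car X)),
    [/\ injective enc, (forall i, opn X (U i)), \bigcup_i U i = setT &
        forall i, exists (V : vectType K) (L : set V),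
          locally_closed (t_opn T V) L /\ iso (induced_on X (U i)) (induced_on (tspace T V) L)].

Definition is_product (T : taylor) (M1 M2 : kspace)
    (o : set (set (car M1 * car M2))) (f : set (car M1 * car M2) -> set (car M1 * car M2 -> K)) : Prop :=
  let P := @Space (car M1 * car M2)%type o f in
  [/\ prevariety T P, smooth P M1 fst, smooth P M2 snd &
      forall M : kspace, prevariety T M ->
        forall (psi1 : car M -> car M1) (psi2 : car M -> car M2),
        smooth M M1 psi1 -> smooth M M2 psi2 ->
        smooth M P (fun x => (psi1 x, psi2 x))].
Arguments is_product : clear implicits.

Definition fib_car (M1 M2 B : kspace) (phi1 : car M1 -> car B) (phi2 : car M2 -> car B) : Type :=
  {x : (car M1 * car M2)%type | phi1 x.1 = phi2 x.2}.

Definition is_fibre_product (T : taylor) (M1 M2 B : kspace)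
    (phi1 : car M1 -> car B) (phi2 : car M2 -> car B)
    (o : set (set (fib_car phi1 phi2))) (f : set (fib_car phi1 phi2) -> set (fib_car phi1 phi2 -> K)) : Prop :=
  let P := @Space (fib_car phi1 phi2) o f in
  [/\ prevariety T P, smooth P M1 (fun x => (proj1_sig x).1), smooth P M2 (fun x => (proj1_sig x).2) &
      forall M : kspace, prevariety T M ->
        forall (psi1 : car M -> car M1) (psi2 : car M -> car M2)
               (H : forall x, phi1 (psi1 x) = phi2 (psi2 x)),
        smooth M M1 psi1 -> smooth M M2 psi2 ->
        smooth M P (fun x => exist (fun y : (car M1 * car M2)%type => phi1 y.1 = phi2 y.2)
                                   (psi1 x, psi2 x) (H x))].

End Spaces.
Arguments car {K} k.
Arguments opn {K} k _.
Arguments fns {K} k _ _.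
Arguments Space {K} car opn fns.
Arguments is_topology {T} o.
Arguments is_sheaf {K} X.
Arguments is_local {K} X.
Arguments in_mp2 {K} X p f.
Arguments cont_into {K T} o f.
Arguments smooth {K} X Y psi.
Arguments iso {K} X Y.
Arguments induced_on {K} X S.
Arguments closed_in {T} o A.
Arguments locally_closed {T} o A.
Arguments lin_fun {K V} phi.
Arguments t_opn {K} t V _.
Arguments t_fns {K} t V _ _.
Arguments tspace {K} T V.
Arguments is_taylor {K} T.
Arguments prevariety {K} T X.
Arguments is_product {K} T M1 M2 o f.
Arguments fib_car {K M1 M2 B} phi1 phi2.
Arguments is_fibre_product {K} T {M1 M2 B} phi1 phi2 o f.

Definition diagK (T : Type) : set (T * T) := [set x | x.1 = x.2].
Arguments diagK T : clear implicits.

(* Main.v *)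
Require Import Defs.
From mathcomp Require Import all_boot all_algebra.
From mathcomp Require Import all_classical all_reals all_analysis.
From mathcomp Require Import complex.
Import GRing.Theory Num.Theory.
Import numFieldNormedType.Exports.

Set Implicit Arguments.
Unset Strict Implicit.
Unset Printing Implicit Defensive.

Local Open Scope ring_scope.
Local Open Scope classical_set_scope.

Lemma sig_eq (T : Type) (P : T -> Prop) (x y : sig P) :
  proj1_sig x = proj1_sig y -> x = y.
Proof.
case: x => x Px; case: y => y Py /= exy; subst y; congr exist; exact: Prop_irrelevance.
Qed.

Definition extf (T U : Type) (S : set T) (d : U) (h : sig S -> U) : T -> U :=
  fun x => match pselect (S x) with left H => h (exist S x H) | right _ => d end.

Lemma extfE (T U : Type) (S : set T) (d : U) (h : sig S -> U) x (H : S x) :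
  extf d h x = h (exist S x H).
Proof.
rewrite /extf; case: pselect => [H'|//]; congr h; exact: sig_eq.
Qed.

Section Top.
Variables (T : Type) (o : set (set T)) (ho : is_topology o).

Lemma top_T : o setT. Proof. by case: ho. Qed.
Lemma top_I A B : o A -> o B -> o (A `&` B). Proof. by case: ho => _ [_ H]; apply: H. Qed.
Lemma top_U (S : set (set T)) : S `<=` o -> o (\bigcup_(A in S) A).
Proof. by case: ho => _ [H _]; apply: H. Qed.

Lemma top_local (A : set T) :
  (forall x, A x -> exists W, [/\ o W, W x & W `<=` A]) -> o A.
Proof.
move=> H.
have -> : A = \bigcup_(W in [set W | o W /\ W `<=` A]) W.
  apply/seteqP; split=> x.
    by move=> /H [W [ oW Wx WA]]; exists W.
  by case=> W [_ WA] /WA.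
by apply: top_U => W [].
Qed.

Lemma top_Ui (I : Type) (F : I -> set T) : (forall i, o (F i)) -> o (\bigcup_i F i).
Proof.
move=> hF; apply: top_local => x [i _ Fx]; exists (F i); split => //.
by move=> y Fy; exists i.
Qed.

Lemma top_0 : o set0.
Proof.
have -> : (set0 : set T) = \bigcup_(A in set0) A.
  by apply/seteqP; split => x // [].
by apply: top_U.
Qed.

Lemma top_UU A B : o A -> o B -> o (A `|` B).
Proof.
move=> oA oB; apply: top_local => x [Ax|Bx].
  by exists A; split => // y Ay; left.
by exists B; split => // y Ay; right.
Qed.

Lemma top_Iseq (I : eqType) (F : I -> set T) (s : seq I) :
  (forall i, o (F i)) -> o (fun x => forall i, i \in s -> F i x).
Proof.
move=> hF; elim: s => [|a s IH].
  have -> : (fun x => forall i, i \in [::] -> F i x) = setT.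
    by apply/funext => x; apply/propext; split => // _ i.
  exact: top_T.
have -> : (fun x => forall i, i \in a :: s -> F i x) =
          F a `&` (fun x => forall i, i \in s -> F i x).
  apply/funext => x; apply/propext; split.
    by move=> H; split; [apply: H; rewrite in_cons eqxx | move=> i iS; apply: H; rewrite in_cons iS orbT].
  by case=> Fa H i; rewrite in_cons => /orP [/eqP ->|/H].
exact: top_I.
Qed.

Lemma top_In n (F : 'I_n -> set T) : (forall i, o (F i)) -> o (fun x => forall i, F i x).
Proof.
move=> hF.
have -> : (fun x => forall i, F i x) = (fun x => forall i, i \in ord_enum n -> F i x).
  apply/funext => x; apply/propext; split => H i //; last by apply: H; rewrite mem_ord_enum.
exact: top_Iseq.
Qed.

End Top.

Section Sheaf.
Variables (K : numFieldType) (X : kspace K) (hX : is_sheaf X).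

Lemma sheaf_top : is_topology (opn X). Proof. by case: hX. Qed.

Lemma fns_ext U f g : opn X U -> fns X U f -> (forall x, U x -> f x = g x) -> fns X U g.
Proof. move=> hU; case: hX => _ /(_ U hU) [e _]; exact: e. Qed.

Lemma fns_cst U (c : K) : opn X U -> fns X U (fun _ => c).
Proof. by move=> hU; case: hX => _ /(_ U hU) [_ [e _]]. Qed.

Lemma fns_add U f g : opn X U -> fns X U f -> fns X U g -> fns X U (fun x => f x + g x).
Proof. by move=> hU; case: hX => _ /(_ U hU) [_ [_ [e _]]] hf hg; case: (e _ _ hf hg). Qed.

Lemma fns_mul U f g : opn X U -> fns X U f -> fns X U g -> fns X U (fun x => f x * g x).
Proof. by move=> hU; case: hX => _ /(_ U hU) [_ [_ [e _]]] hf hg; case: (e _ _ hf hg). Qed.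

Lemma fns_scale U (c : K) f : opn X U -> fns X U f -> fns X U (fun x => c * f x).
Proof. by move=> hU; case: hX => _ /(_ U hU) [_ [_ [_ [e _]]]]; apply: e. Qed.

Lemma fns_restr U U' f : opn X U -> opn X U' -> U' `<=` U -> fns X U f -> fns X U' f.
Proof. by move=> hU hU' sU; case: hX => _ /(_ U hU) [_ [_ [_ [_ [e _]]]]]; apply: e. Qed.

Lemma fns_glue U f : opn X U ->
  (forall p, U p -> exists W, [/\ opn X W, W p, W `<=` U & fns X W f]) -> fns X U f.
Proof.
move=> hU H; case: hX => _ /(_ U hU) [_ [_ [_ [_ [_ e]]]]]; apply: e => p /H [W [*]].
by exists W.
Qed.

Lemma fns_opp U f : opn X U -> fns X U f -> fns X U (fun x => - f x).
Proof.
move=> hU hf; apply: (fns_ext hU (fns_scale (-1) hU hf)) => x _; by rewrite mulN1r.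
Qed.

Lemma fns_sub U f g : opn X U -> fns X U f -> fns X U g -> fns X U (fun x => f x - g x).
Proof. move=> hU hf hg; exact: (fns_add hU hf (fns_opp hU hg)). Qed.

Lemma fns_sum U n (G : 'I_n -> car X -> K) : opn X U -> (forall l, fns X U (G l)) ->
  fns X U (fun x => \sum_(l < n) G l x).
Proof.
move=> hU; elim: n G => [|n IH] G hG.
  by apply: (fns_ext hU (fns_cst 0 hU)) => x _; rewrite big_ord0.
have h1 := IH (fun l => G (widen_ord (leqnSn n) l)) (fun l => hG _).
apply: (fns_ext hU (fns_add hU h1 (hG ord_max))) => x _.
by rewrite big_ord_recr.
Qed.

End Sheaf.

Section Induced.
Variable K : numFieldType.
Implicit Types X Y Z : kspace K.

Lemma ind_open X (S : set (car X)) Q0 : opn X Q0 ->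
  opn (induced_on X S) (fun x => Q0 (proj1_sig x)).
Proof. by move=> hO; exists Q0. Qed.

Lemma ind_fns X (S : set (car X)) Q0 f : opn X Q0 -> fns X Q0 f ->
  fns (induced_on X S) (fun x => Q0 (proj1_sig x)) (fun x => f (proj1_sig x)).
Proof. by move=> hO hf p Op; exists Q0, f; split. Qed.

Lemma ind_sheaf X (S : set (car X)) : is_sheaf X -> is_sheaf (induced_on X S).
Proof.
move=> hX; have tX := sheaf_top hX.
split.
  split; first by exists setT; split => //; exact: top_T.
  split.
    move=> F sF.
    exists (\bigcup_(Ob in [set Ob | opn X Ob /\ exists A, F A /\ A = (fun x => Ob (proj1_sig x))]) Ob).
    split.
      by apply: top_U => // Ob [].
    apply/seteqP; split => x /=.
      case=> A FA Ax; have [ Ob [hO eA]] := sF A FA.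
      by exists Ob; [split => //; exists A | rewrite eA in Ax].
    by case=> Ob [hO [A [FA eA]]] Ox; exists A => //; rewrite eA.
  move=> A B [ OA [hA ->]] [ OB [hB ->]]; exists (OA `&` OB); split => //.
  exact: top_I.
move=> U [ OU [hOU eU]]; subst U.
split.
  move=> f g hf efg p Up; have [ Ob [f' [hO Op hf' ag]]] := hf p Up.
  by exists Ob, f'; split => // x Ux Ox; rewrite -efg // ag.
split.
  by move=> c p _; exists setT, (fun _ => c); split => //; [exact: top_T | exact: fns_cst (top_T tX)].
split.
  move=> f g hf hg; split => p Up.
    have [ O1 [f1 [h1 O1p hf1 ag1]]] := hf p Up.
    have [ O2 [f2 [h2 O2p hf2 ag2]]] := hg p Up.
    have h12 := top_I tX h1 h2.
    exists (O1 `&` O2), (fun x => f1 x + f2 x); split => //.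
      apply: fns_add => //; [exact: (fns_restr hX h1 h12 _ hf1) | exact: (fns_restr hX h2 h12 _ hf2)];
        by move=> x [].
    by move=> x Ux [ O1x O2x]; rewrite ag1 // ag2.
  have [ O1 [f1 [h1 O1p hf1 ag1]]] := hf p Up.
  have [ O2 [f2 [h2 O2p hf2 ag2]]] := hg p Up.
  have h12 := top_I tX h1 h2.
  exists (O1 `&` O2), (fun x => f1 x * f2 x); split => //.
    apply: fns_mul => //; [exact: (fns_restr hX h1 h12 _ hf1) | exact: (fns_restr hX h2 h12 _ hf2)];
      by move=> x [].
  by move=> x Ux [ O1x O2x]; rewrite ag1 // ag2.
split.
  move=> c f hf p Up; have [ O1 [f1 [h1 O1p hf1 ag1]]] := hf p Up.
  by exists O1, (fun x => c * f1 x); split => //; [exact: fns_scale | move=> x Ux Ox; rewrite ag1].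
split.
  move=> U' [Q0' [hO' eU']] sU f hf p U'p; have [ O1 [f1 [h1 O1p hf1 ag1]]] := hf p (sU p U'p).
  by exists O1, f1; split => // x U'x; apply: ag1; apply: sU.
move=> f H p Up; have [W [[ OW [hOW eW]] [Wp [WU hfW]]]] := H p Up.
have [ O1 [f1 [h1 O1p hf1 ag1]]] := hfW p Wp.
have h' := top_I tX h1 hOW.
exists (O1 `&` OW), f1; split => //.
  by rewrite eW in Wp.
  by apply: (fns_restr hX h1 h' _ hf1) => x [].
move=> x Ux [ O1x OWx]; apply: ag1 => //; by rewrite eW.
Qed.

Lemma smooth_id X : smooth X X id.
Proof. by split. Qed.

Lemma smooth_comp X Y Z (p : car X -> car Y) (q : car Y -> car Z) :
  smooth X Y p -> smooth Y Z q -> smooth X Z (fun x => q (p x)).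
Proof.
move=> [p1 p2] [q1 q2]; split.
  by move=> Q0 hO; apply: (p1 (q @^-1` Q0)); apply: q1.
by move=> Q0 g hO hg; exact: (p2 (q @^-1` Q0) (fun y => g (q y)) (q1 _ hO) (q2 _ _ hO hg)).
Qed.

Lemma smooth_restr X Y (S : set (car X)) (p : car X -> car Y) :
  smooth X Y p -> smooth (induced_on X S) Y (fun x => p (proj1_sig x)).
Proof.
move=> [p1 p2]; split.
  by move=> Q0 hO; exact (@ind_open X S _ (p1 _ hO)).
by move=> Q0 g hO hg; exact (@ind_fns X S _ _ (p1 _ hO) (p2 _ _ hO hg)).
Qed.

Lemma smooth_val X (S : set (car X)) : smooth (induced_on X S) X (@proj1_sig _ S).
Proof. exact: (smooth_restr S (smooth_id X)). Qed.

Lemma smooth_corestr X Y (S : set (car Y)) (p : car X -> car Y) (H : forall x, S (p x)) :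
  is_sheaf X -> smooth X Y p -> smooth X (induced_on Y S) (fun x => exist S (p x) (H x)).
Proof.
move=> hX [p1 p2]; have tX := sheaf_top hX; split.
  by move=> A [Q0 [hO ->]]; apply: p1.
move=> A g [Q0 [hO eA]] hg; subst A.
apply: fns_glue => //; first by apply: p1.
move=> x Ox.
have [Q0' [f' [hO' Q0'x hf' ag]]] := hg (exist S (p x) (H x)) Ox.
have hW := top_I tX (p1 _ hO) (p1 _ hO').
exists (p @^-1` (Q0 `&` Q0')); split => //.
  by move=> y [].
apply: (fns_ext hX hW (fns_restr hX (p1 _ hO') hW _ (p2 _ _ hO' hf'))).
  by move=> y [].
by move=> y [ Oy Q0'y]; rewrite ag.
Qed.

Lemma ind_to X (S : set (car X)) (U : set (car X)) (k : car X -> K) :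
  is_sheaf X -> opn X U -> U `<=` S ->
  fns (induced_on X S) (fun x => U (proj1_sig x)) (fun x => k (proj1_sig x)) ->
  fns X U k.
Proof.
move=> hX hU sUS hk; have tX := sheaf_top hX.
apply: fns_glue => // x Ux.
have [Q0 [f [hO Ox hf ag]]] := hk (exist S x (sUS x Ux)) Ux.
have hW := top_I tX hU hO.
exists (U `&` Q0); split => //; try by move=> y [].
apply: (fns_ext hX hW (fns_restr hX hO hW _ hf)); first by move=> y [].
move=> y [Uy Oy]; exact: (esym (ag (exist S y (sUS y Uy)) Uy Oy)).
Qed.

End Induced.

Lemma fns_congr (K : numFieldType) (X : kspace K) U U' f f' :
  U = U' -> (forall x, f x = f' x) -> fns X U f -> fns X U' f'.
Proof. by move=> <- e; have -> : f' = f by apply/funext => x; rewrite e. Qed.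

Lemma opn_congr (K : numFieldType) (X : kspace K) U U' : U = U' -> opn X U -> opn X U'.
Proof. by move=> <-. Qed.

Lemma top_Uin (T : Type) (o : set (set T)) (ho : is_topology o) (I : Type) (P : set I) (F : I -> set T) :
  (forall i, P i -> o (F i)) -> o (\bigcup_(i in P) F i).
Proof.
move=> hF; apply: (top_local ho) => x [i Pi Fx]; exists (F i); split => //; first exact: hF.
by move=> y Fy; exists i.
Qed.

Section Lin.
Variable K : numFieldType.

Lemma lin0 (V : vectType K) (phi : V -> K) : lin_fun phi -> phi 0 = 0.
Proof.
move=> hl; have e := hl 1 0 0; rewrite scaler0 addr0 mul1r in e.
by apply: (@addrI _ (phi 0)); rewrite addr0 -e.
Qed.

Lemma linD (V : vectType K) (phi : V -> K) u v : lin_fun phi -> phi (u + v) = phi u + phi v.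
Proof. by move=> hl; have := hl 1 u v; rewrite scale1r mul1r. Qed.

Lemma linZ (V : vectType K) (phi : V -> K) a u : lin_fun phi -> phi (a *: u) = a * phi u.
Proof. by move=> hl; have := hl a u 0; rewrite addr0 lin0 // addr0. Qed.

Lemma lin_sum (V : vectType K) (phi : V -> K) n (a : 'I_n -> K) (w : 'I_n -> V) :
  lin_fun phi -> phi (\sum_(l < n) a l *: w l) = \sum_(l < n) a l * phi (w l).
Proof.
move=> hl; elim: n a w => [|n IH] a w; first by rewrite !big_ord0 lin0.
by rewrite !big_ord_recr /= linD // linZ // IH.
Qed.

Definition crd (W : vectType K) (l : 'I_(\dim (fullv : {vspace W}))) : W -> K :=
  coord (vbasis fullv) l.

Lemma crd_lin (W : vectType K) l : lin_fun (@crd W l).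
Proof. by move=> a u v; rewrite /crd linearP. Qed.

Lemma crd_expand (W : vectType K) (v : W) :
  v = \sum_(l < \dim (fullv : {vspace W})) crd l v *: (vbasis fullv)`_l.
Proof. exact: coord_vbasis (memvf v). Qed.

Lemma crd_inj (W : vectType K) (u v : W) : (forall l, crd l u = crd l v) -> u = v.
Proof.
move=> H; rewrite (crd_expand u) (crd_expand v); apply: eq_bigr => l _; by rewrite H.
Qed.

End Lin.

Section Taylor.
Variables (K : numFieldType) (T : taylor K) (hT : is_taylor T).

Lemma tsheaf (V : vectType K) : is_sheaf (tspace T V).
Proof. have H := hT V; cbv zeta in H; destruct H as [[hs _] _ _ _ _]; exact hs. Qed.

Lemma ttop (V : vectType K) : is_topology (opn (tspace T V)).
Proof. exact: sheaf_top (tsheaf V). Qed.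

Lemma tcont (V : vectType K) f : fns (tspace T V) setT f -> cont_into (opn (tspace T V)) f.
Proof. have H := hT V; cbv zeta in H; destruct H as [_ [h1 _] _ _ _]; exact: h1. Qed.

Lemma tlin (V : vectType K) (phi : V -> K) : lin_fun phi -> fns (tspace T V) setT phi.
Proof. have H := hT V; cbv zeta in H; destruct H as [_ _ h2 _ _]; exact: h2. Qed.

Lemma tsmooth (V W : vectType K) (U : set V) (psi : V -> W) : opn (tspace T V) U ->
  (forall phi : W -> K, lin_fun phi -> fns (tspace T V) U (fun x => phi (psi x))) ->
  smooth (induced_on (tspace T V) U) (tspace T W) (fun x => psi (proj1_sig x)).
Proof. move=> hU H'; have H := hT V; cbv zeta in H; destruct H as [_ _ _ h3 _]; exact/(h3 W U psi hU). Qed.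

Section Chart.
Variables (M : kspace K) (hM : is_sheaf M) (Ua : set (car M)) (hUa : opn M Ua)
  (V : vectType K) (L : set V)
  (h : sig Ua -> sig L) (hs : smooth (induced_on M Ua) (induced_on (tspace T V) L) h).

Definition hvf := extf 0 (fun y => proj1_sig (h y)).

Lemma chart_open Oo : opn (tspace T V) Oo -> opn M (Ua `&` hvf @^-1` Oo).
Proof.
move=> hO; have [ O' [hO' e]] := hs.1 _ (@ind_open K (tspace T V) L Oo hO).
have -> : Ua `&` hvf @^-1` Oo = Ua `&` O'.
  apply/seteqP; split => y [Uy H]; split => //;
  have E := congr1 (fun P => P (exist Ua y Uy)) e; move: H E;
  rewrite /preimage /= /hvf (extfE _ _ Uy) /= => H E; [by rewrite -E | by rewrite E].
by apply: top_I => //; apply: sheaf_top.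
Qed.

Lemma chart_fns Oo F : opn (tspace T V) Oo -> fns (tspace T V) Oo F ->
  fns M (Ua `&` hvf @^-1` Oo) (fun y => F (hvf y)).
Proof.
move=> hO hF.
have h1 := hs.2 _ _ (@ind_open K (tspace T V) L Oo hO) (@ind_fns K (tspace T V) L Oo F hO hF).
apply: (@ind_to _ M Ua _ _ hM (chart_open hO)); first by move=> y [].
apply: (fns_congr _ _ h1).
  apply/funext => -[y Uy]; apply/propext; rewrite /preimage /= /hvf (extfE _ _ Uy); split => //.
  by case.
by move=> -[y Uy]; rewrite /= /hvf (extfE _ _ Uy).
Qed.

End Chart.

End Taylor.

Section Key.
Variables (K : numFieldType) (T : taylor K) (hT : is_taylor T).

Lemma prev_sheaf (M : kspace K) : prevariety T M -> is_sheaf M.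
Proof. by case. Qed.

Lemma prev_chart (M : kspace K) (hM : prevariety T M) m :
  exists (Ua : set (car M)) (V : vectType K) (L : set V) (h : sig Ua -> sig L) (g : sig L -> sig Ua),
  [/\ opn M Ua, Ua m, locally_closed (t_opn T V) L,
      smooth (induced_on M Ua) (induced_on (tspace T V) L) h &
      smooth (induced_on (tspace T V) L) (induced_on M Ua) g] /\ (cancel h g /\ cancel g h).
Proof.
case: hM => hs [ Ix [enc [U [inj hop hcov hch]]]].
have : (\bigcup_i U i) m by rewrite hcov.
case=> i _ Um; have [V [L [lc [h [g [hh hg c1 c2]]]]]] := hch i.
by exists (U i), V, L, h, g.
Qed.

Variables (M : kspace K) (hM : prevariety T M) (W : vectType K) (U : set (car M)) (q : car M -> W)
  (hU : opn M U) (hq : forall psi : W -> K, lin_fun psi -> fns M U (fun x => psi (q x))).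

Let hMs := prev_sheaf hM.
Let tM := sheaf_top hMs.

Lemma key_setup m : U m -> exists (V : vectType K) (Ostar : set V) (qt : V -> W) (hv : car M -> V) (Ua : set (car M)),
 [/\ opn M Ua, Ua m, opn (tspace T V) Ostar, Ostar (hv m)
     & smooth (induced_on (tspace T V) Ostar) (tspace T W) (fun x => qt (proj1_sig x))] /\
  [/\ (forall Oo, opn (tspace T V) Oo -> opn M (Ua `&` hv @^-1` Oo)),
     (forall Oo F, opn (tspace T V) Oo -> fns (tspace T V) Oo F -> fns M (Ua `&` hv @^-1` Oo) (fun y => F (hv y)))
     &
     (forall y, Ua y -> U y -> Ostar (hv y) -> q y = qt (hv y))].
Proof.
move=> Um.
have [Ua [V [L [h [g [[hUa Uam lc hh hg] [c1 c2]]]]]]] := prev_chart hM m.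
set n := \dim (fullv : {vspace W}).
set t := h (exist Ua m Uam).
have gt : g t = exist Ua m Uam by rewrite /t c1.
have hcl : forall l : 'I_n, exists OF : set V * (V -> K),
    [/\ opn (tspace T V) OF.1, OF.1 (proj1_sig t), fns (tspace T V) OF.1 OF.2 &
        forall x : sig L, U (proj1_sig (g x)) -> OF.1 (proj1_sig x) ->
          crd l (q (proj1_sig (g x))) = OF.2 (proj1_sig x)].
  move=> l.
  have h1 := @ind_fns K M Ua U _ hU (hq (@crd_lin K W l)).
  have h2 := hg.2 _ _ (@ind_open K M Ua U hU) h1.
  have Ut : (g @^-1` (fun x => U (proj1_sig x))) t by rewrite /preimage /= gt.
  have [Oo [F [hO Ot hF ag]]] := h2 t Ut.
  by exists (Oo, F); split.
have [OF hOF] := choice hcl.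
pose Ostar := fun v => forall l, (OF l).1 v.
pose qt := fun v => \sum_(l < n) (OF l).2 v *: (vbasis (fullv : {vspace W}))`_l.
have hOs : opn (tspace T V) Ostar by apply: top_In => [|l]; [exact: ttop | by case: (hOF l)].
exists V, Ostar, qt, (hvf h), Ua; split; split => //.
- by move=> l; rewrite /hvf (extfE _ _ Uam); case: (hOF l).
- apply: tsmooth => // psi hpsi.
  have e : forall v, psi (qt v) = \sum_(l < n) psi (vbasis (fullv : {vspace W}))`_l * (OF l).2 v.
    by move=> v; rewrite /qt lin_sum //; apply: eq_bigr => l _; rewrite mulrC.
  apply: (fns_ext (tsheaf hT V) hOs _ (fun v _ => esym (e v))).
  apply: (fns_sum (tsheaf hT V)) => // l; apply: (fns_scale (tsheaf hT V)) => //.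
  case: (hOF l) => hO _ hF _; apply: (fns_restr (tsheaf hT V) hO hOs _ hF).
  by move=> v /(_ l).
- by move=> Oo hO; exact: (chart_open hMs hUa hh hO).
- by move=> Oo F hO hF; exact: (chart_fns hMs hUa hh hO hF).
move=> y Uy Uyy Os.
rewrite /hvf (extfE _ _ Uy) in Os *.
set x := h (exist Ua y Uy) in Os *.
have gx : g x = exist Ua y Uy by rewrite /x c1.
rewrite [LHS]crd_expand /qt; apply: eq_bigr => l _; congr (_ *: _).
case: (hOF l) => _ _ _ ag.
have := ag x; rewrite gx /= => ->//.
Qed.

Lemma key_open O : opn (tspace T W) O -> opn M (U `&` q @^-1` O).
Proof.
move=> hO; apply: (top_local tM) => m [Um Oqm].
have [V [Os [qt [hv [Ua [[hUa Uam hOs Osm sm] [hvo hvf' ag]]]]]]] := key_setup Um.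
have [ O2 [hO2 e2]] := sm.1 _ hO.
have tV := ttop hT V.
have hO3 := top_I tV hOs hO2.
exists ((Ua `&` hv @^-1` (Os `&` O2)) `&` U); split.
- apply: (top_I tM) => //; exact: hvo.
- split => //; split => //; split => //.
  have := congr1 (fun P => P (exist Os (hv m) Osm)) e2 => /= <-.
  by rewrite /preimage /= -ag.
- move=> y [[Uay [Osy O2y]] Uy]; split => //.
  rewrite /preimage /= ag //.
  by have := congr1 (fun P => P (exist Os (hv y) Osy)) e2 => /= ->.
Qed.

Lemma key_fns O F : opn (tspace T W) O -> fns (tspace T W) O F ->
  fns M (U `&` q @^-1` O) (fun x => F (q x)).
Proof.
move=> hO hF; apply: (fns_glue hMs (key_open hO)) => m [Um Oqm].
have [V [Os [qt [hv [Ua [[hUa Uam hOs Osm sm] [hvo hvf' ag]]]]]]] := key_setup Um.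
have [ O2 [hO2 e2]] := sm.1 _ hO.
have hFs := sm.2 _ _ hO hF.
have x0P : ((fun x : sig Os => qt (proj1_sig x)) @^-1` O) (exist Os (hv m) Osm).
  by rewrite /preimage /= -ag.
have [ O5 [F5 [hO5 O5m hF5 ag5]]] := hFs _ x0P.
have tV := ttop hT V.
have hO6 : opn (tspace T V) (Os `&` O2 `&` O5) by apply: top_I => //; apply: top_I.
have hN := hvo _ hO6.
exists ((Ua `&` hv @^-1` (Os `&` O2 `&` O5)) `&` U); split.
- exact: (top_I tM).
- split => //; split => //; split => //; split => //.
  have := congr1 (fun P => P (exist Os (hv m) Osm)) e2 => /= <-.
  by rewrite /preimage /= -ag.
- move=> y [[Uay [[Osy O2y] O5y]] Uy]; split => //.
  rewrite /preimage /= ag //.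
  by have := congr1 (fun P => P (exist Os (hv y) Osy)) e2 => /= ->.
have h6 := hvf' _ _ hO6 (fns_restr (tsheaf hT V) hO5 hO6 (fun v H => H.2) hF5).
have h7 := fns_restr hMs hN (top_I tM hN hU) (fun y H => H.1) h6.
apply: (fns_ext hMs (top_I tM hN hU) h7) => y [[Uay [[Osy O2y] O5y]] Uy].
have Oy : O (qt (hv y)).
  by have := congr1 (fun P => P (exist Os (hv y) Osy)) e2 => /= ->.
by rewrite ag // (ag5 (exist Os (hv y) Osy)).
Qed.

End Key.

Lemma smooth_from_setT (K : numFieldType) (X Y : kspace K) (p : car X -> car Y) :
  is_sheaf X -> smooth (induced_on X setT) Y (fun x => p (proj1_sig x)) -> smooth X Y p.
Proof.
move=> hX [s1 s2].
have hop : forall Oo, opn Y Oo -> opn X (p @^-1` Oo).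
  move=> Oo hO; have [ O' [hO' e]] := s1 _ hO.
  suff -> : p @^-1` Oo = O' by [].
  apply/funext => x; exact: (congr1 (fun P => P (exist setT x I)) e).
split => // Oo g hO hg.
apply: (@ind_to _ X setT _ _ hX (hop _ hO)) => //.
exact: (s2 _ _ hO hg).
Qed.

Section App.
Variables (K : numFieldType) (T : taylor K) (hT : is_taylor T).

Lemma smooth_tlin (V W : vectType K) (p : V -> W) :
  (forall chi : W -> K, lin_fun chi -> lin_fun (fun v => chi (p v))) ->
  smooth (tspace T V) (tspace T W) p.
Proof.
move=> hl; apply: smooth_from_setT; first exact: tsheaf.
apply: tsmooth => //; first exact: (top_T (ttop hT V)).
by move=> chi hchi; apply: tlin => //; apply: hl.
Qed.

Lemma smooth_fst (V1 V2 : vectType K) :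
  smooth (tspace T (V1 * V2)%type) (tspace T V1) fst.
Proof. by apply: smooth_tlin => chi hchi a u v; apply: hchi. Qed.

Lemma smooth_snd (V1 V2 : vectType K) :
  smooth (tspace T (V1 * V2)%type) (tspace T V2) snd.
Proof. by apply: smooth_tlin => chi hchi a u v; apply: hchi. Qed.

Lemma topen_lin (V : vectType K) (phi : V -> K) (O : set K) :
  lin_fun phi -> open O -> opn (tspace T V) (phi @^-1` O).
Proof. by move=> hl hO; apply: (tcont hT (tlin hT hl)). Qed.

Lemma nz_open (M : kspace K) (hM : prevariety T M) (U : set (car M)) (F : car M -> K) :
  opn M U -> fns M U F -> opn M (U `&` [set x | F x != 0]).
Proof.
move=> hU hF.
have hq : forall psi : K^o -> K, lin_fun psi -> fns M U (fun x => psi (F x)).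
  move=> psi hpsi.
  apply: (fns_ext (prev_sheaf hM) hU (fns_scale (prev_sheaf hM) (psi 1) hU hF)) => x _.
  have := linZ (F x) (1 : K^o) hpsi; rewrite /GRing.scale /= mulr1 => ->.
  by rewrite mulrC.
have hO : opn (tspace T K^o) (~` [set (0 : K)]).
  have := @topen_lin K^o id (~` [set (0 : K)]) (fun a u v => erefl) _.
  apply.
  apply: closed_openC; apply: accessible_closed_set1; apply: hausdorff_accessible.
  exact: norm_hausdorff.
have := key_open hT hM hU hq hO.
suff -> : U `&` F @^-1` (~` [set 0]) = U `&` [set x | F x != 0] by [].
apply/seteqP; split => x [Ux H]; split => //=.
  by apply/eqP.
by move/eqP: H.
Qed.

Lemma LC_prevariety (V : vectType K) (L : set V) :
  locally_closed (t_opn T V) L -> prevariety T (induced_on (tspace T V) L).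
Proof.
move=> lc; have hX := @ind_sheaf K (tspace T V) L (tsheaf hT V).
split => //.
exists unit, (fun _ => 0%N), (fun _ => setT); split.
- by move=> [] [].
- move=> _; exact: (top_T (sheaf_top hX)).
- by apply/seteqP; split => x // _; exists tt.
move=> _; exists V, L; split => //.
exists (fun x => proj1_sig x), (fun y => exist setT y I); split.
- exact: smooth_val.
- exact: (smooth_corestr (fun _ => I) hX (smooth_id _)).
- by case=> x [].
- by [].
Qed.

Lemma LC_prod (V1 V2 : vectType K) (L1 : set V1) (L2 : set V2) :
  locally_closed (t_opn T V1) L1 -> locally_closed (t_opn T V2) L2 ->
  locally_closed (t_opn T (V1 * V2)%type) (fun ab => L1 ab.1 /\ L2 ab.2).
Proof.
move=> [ O1 [C1 [hO1 hC1 e1]]] [ O2 [C2 [hO2 hC2 e2]]].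
have t12 := ttop hT (V1 * V2)%type.
exists (fst @^-1` O1 `&` snd @^-1` O2), (fst @^-1` C1 `&` snd @^-1` C2); split.
- apply: (top_I t12); [exact: (smooth_fst V1 V2).1 | exact: (smooth_snd V1 V2).1].
- rewrite /closed_in.
  have -> : ~` (fst @^-1` C1 `&` snd @^-1` C2) = fst @^-1` (~` C1) `|` snd @^-1` (~` C2).
    by rewrite setCI.
  apply: (top_UU t12); [exact: (smooth_fst V1 V2).1 | exact: (smooth_snd V1 V2).1].
- apply/funext => -[a b] /=; rewrite e1 e2; apply/propext; split.
    by case=> -[? ?] [? ?].
  by case=> -[? ?] [? ?].
Qed.

End App.

Section Diag.
Variables (K : numFieldType) (T : taylor K) (hT : is_taylor T).

Lemma chart_coord (B : kspace K) (hBs : is_sheaf B) (Ua : set (car B)) (hUa : opn B Ua)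
  (V : vectType K) (L : set V) (h : sig Ua -> sig L)
  (hh : smooth (induced_on B Ua) (induced_on (tspace T V) L) h) l :
  fns B Ua (fun y => crd l (hvf h y)).
Proof.
have := chart_fns hBs hUa hh (top_T (ttop hT V)) (tlin hT (@crd_lin K V l)).
apply: fns_congr => //.
by apply/seteqP; split => y // [].
Qed.

Lemma chart_inj (B : kspace K) (Ua : set (car B)) (V : vectType K) (L : set V)
  (h : sig Ua -> sig L) (g : sig L -> sig Ua) (c1 : cancel h g) y1 y2 :
  Ua y1 -> Ua y2 -> hvf h y1 = hvf h y2 -> y1 = y2.
Proof.
move=> U1 U2; rewrite /hvf (extfE _ _ U1) (extfE _ _ U2) => e.
have := congr1 (fun x => proj1_sig (g x)) (sig_eq e); by rewrite !c1.
Qed.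

Lemma coord_neq (V : vectType K) (u v : V) : u <> v -> exists l, crd l u - crd l v != 0.
Proof.
move=> nuv; apply: contrapT => H; apply: nuv; apply: crd_inj => l.
apply/eqP; rewrite -subr_eq0; apply/negPn/negP => hn; apply: H; by exists l.
Qed.

Lemma part2 (V : vectType K) (L : set V) (lc : locally_closed (t_opn T V) L) o f :
  is_product T (induced_on (tspace T V) L) (induced_on (tspace T V) L) o f ->
  closed_in o (diagK (car (induced_on (tspace T V) L))).
Proof.
move=> [hPv hf hs _].
pose P : kspace K := @Defs.Space K (car (induced_on (tspace T V) L) * car (induced_on (tspace T V) L))%type o f.
have tP := sheaf_top (prev_sheaf hPv).
have hXs := @ind_sheaf K (tspace T V) L (tsheaf hT V).
pose F l (z : car P) := crd l (proj1_sig z.1) - crd l (proj1_sig z.2).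
have hF : forall l, fns P setT (F l).
  move=> l.
  have h0 := @ind_fns K (tspace T V) L setT _ (top_T (ttop hT V)) (tlin hT (@crd_lin K V l)).
  have h1 : fns P setT (fun z : car P => crd l (proj1_sig z.1)) := hf.2 _ _ (top_T (sheaf_top hXs)) h0.
  have h2 : fns P setT (fun z : car P => crd l (proj1_sig z.2)) := hs.2 _ _ (top_T (sheaf_top hXs)) h0.
  exact: (fns_sub (prev_sheaf hPv) (top_T tP) h1 h2).
rewrite /closed_in.
have -> : ~` diagK (car (induced_on (tspace T V) L)) = \bigcup_l (setT `&` [set z | F l z != 0]).
  apply/seteqP; split => z /=.
    move=> nz; have [l Hl] : exists l, F l z != 0.
      apply: coord_neq => e; apply: nz; exact: sig_eq.
    by exists l.
  case=> l _ [_ Hl] e; rewrite /diagK /= in e; move: Hl; by rewrite /F /= e subrr eqxx.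
apply: top_Ui => // l.
exact: (nz_open hT hPv (top_T tP) (hF l)).
Qed.

Lemma part1 (B : kspace K) (hB : prevariety T B) o f :
  is_product T B B o f -> locally_closed o (diagK (car B)).
Proof.
move=> [hPv hf hs _].
pose P : kspace K := @Defs.Space K (car B * car B)%type o f.
have hPs := prev_sheaf hPv.
have tP := sheaf_top hPs.
have hBs := prev_sheaf hB.
pose O (z : car P) := exists (Ua : set (car B)) (V : vectType K) (L : set V)
   (h : sig Ua -> sig L) (g : sig L -> sig Ua),
   [/\ opn B Ua, smooth (induced_on B Ua) (induced_on (tspace T V) L) h, cancel h g,
       Ua z.1 & Ua z.2].
have hW : forall Ua : set (car B), opn B Ua -> opn P (fun z : car P => Ua z.1 /\ Ua z.2).
  move=> Ua hUa; exact: (top_I tP (hf.1 _ hUa) (hs.1 _ hUa)).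
have hO : opn P O.
  apply: (top_local tP) => z [Ua [V [L [h [g [hUa hh c1 U1 U2]]]]]].
  exists (fun z : car P => Ua z.1 /\ Ua z.2); split => //; first exact: hW.
  by move=> y [Y1 Y2]; exists Ua, V, L, h, g; split.
exists O, (fun z : car P => z.1 = z.2 \/ ~ O z); split => //.
- rewrite /closed_in; apply: (top_local tP) => z /= nC.
  have [nz Oz] : z.1 <> z.2 /\ O z.
    by split => [e|]; [apply: nC; left | apply: contrapT => nO; apply: nC; right].
  case: (Oz) => [Ua [V [L [h [g [hUa hh c1 U1 U2]]]]]].
  have [l Hl] := coord_neq (fun e => nz (chart_inj c1 U1 U2 e)).
  pose F (y : car P) := crd l (hvf h y.1) - crd l (hvf h y.2).
  have hWo := hW _ hUa.
  have hF : fns P (fun z : car P => Ua z.1 /\ Ua z.2) F.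
    have e1 := chart_coord hBs hUa hh l.
    have h1 := fns_restr hPs (hf.1 _ hUa) hWo (fun y H => H.1) (hf.2 _ _ hUa e1).
    have h2 := fns_restr hPs (hs.1 _ hUa) hWo (fun y H => H.2) (hs.2 _ _ hUa e1).
    exact: (fns_sub hPs hWo h1 h2).
  exists ((fun z : car P => Ua z.1 /\ Ua z.2) `&` [set y | F y != 0]); split.
  + exact: (nz_open hT hPv hWo hF).
  + by split.
  + move=> y [[Y1 Y2] Fy] [e|nO].
      by move: Fy; rewrite /F /= e subrr eqxx.
    by apply: nO; exists Ua, V, L, h, g; split.
- apply/seteqP; split => z.
    move=> e; rewrite /diagK /= in e; split; last by left.
    have [Ua [V [L [h [g [[hUa U1 _ hh _] [c1 _]]]]]]] := prev_chart hB z.1.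
    by exists Ua, V, L, h, g; split => //; rewrite -e.
  by case=> Oz [e|//].
Qed.

End Diag.

Section PairLemmas.
Variable K : numFieldType.
Variables V1 V2 : vectType K.
Lemma pair_lin1 c (u v : V1) : ((c *: u + v, 0) : V1 * V2) = c *: (u, 0) + (v, 0).
Proof.
rewrite [RHS]surjective_pairing.
have -> : (c *: ((u, 0) : V1 * V2) + (v, 0)).1 = c *: u + v := erefl.
have -> : (c *: ((u, 0) : V1 * V2) + (v, 0)).2 = c *: 0 + 0 := erefl.
by rewrite scaler0 addr0.
Qed.
Lemma pair_lin2 c (u v : V2) : ((0, c *: u + v) : V1 * V2) = c *: (0, u) + (0, v).
Proof.
rewrite [RHS]surjective_pairing.
have -> : (c *: ((0, u) : V1 * V2) + (0, v)).1 = c *: 0 + 0 := erefl.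
have -> : (c *: ((0, u) : V1 * V2) + (0, v)).2 = c *: u + v := erefl.
by rewrite scaler0 addr0.
Qed.
Lemma pair_dec (a : V1) (b : V2) : ((a, b) : V1 * V2) = (a, 0) + (0, b).
Proof.
rewrite [RHS]surjective_pairing.
have -> : (((a, 0) : V1 * V2) + (0, b)).1 = a + 0 := erefl.
have -> : (((a, 0) : V1 * V2) + (0, b)).2 = 0 + b := erefl.
by rewrite addr0 add0r.
Qed.
End PairLemmas.

Section Fib.
Variables (K : numFieldType) (T : taylor K) (hT : is_taylor T)
  (M1 M2 B : kspace K) (hM1 : prevariety T M1) (hM2 : prevariety T M2) (hB : prevariety T B)
  (phi1 : car M1 -> car B) (phi2 : car M2 -> car B)
  (hphi1 : smooth M1 B phi1) (hphi2 : smooth M2 B phi2).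

Definition FC := fib_car phi1 phi2.

Definition pairf (M : kspace K) (psi1 : car M -> car M1) (psi2 : car M -> car M2)
  (H : forall x, phi1 (psi1 x) = phi2 (psi2 x)) : car M -> FC :=
  fun x => exist (fun y : (car M1 * car M2)%type => phi1 y.1 = phi2 y.2) (psi1 x, psi2 x) (H x).

Definition fo : set (set FC) := fun A =>
  forall (M : kspace K), prevariety T M -> forall psi1 psi2 (H : forall x, phi1 (psi1 x) = phi2 (psi2 x)),
  smooth M M1 psi1 -> smooth M M2 psi2 -> opn M (pairf H @^-1` A).

Definition ff : set FC -> set (FC -> K) := fun A g =>
  forall (M : kspace K), prevariety T M -> forall psi1 psi2 (H : forall x, phi1 (psi1 x) = phi2 (psi2 x)),
  smooth M M1 psi1 -> smooth M M2 psi2 -> fns M (pairf H @^-1` A) (fun x => g (pairf H x)).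

Definition FP : kspace K := @Defs.Space K FC fo ff.

Lemma FP_top : is_topology fo.
Proof.
split; first by move=> M hM *; exact: (top_T (sheaf_top (prev_sheaf hM))).
split.
  move=> S hS M hM psi1 psi2 H s1 s2; rewrite preimage_bigcup.
  apply: (top_Uin (sheaf_top (prev_sheaf hM))) => A SA; exact: hS.
move=> A1 A2 h1 h2 M hM psi1 psi2 H s1 s2.
exact: (top_I (sheaf_top (prev_sheaf hM)) (h1 M hM _ _ H s1 s2) (h2 M hM _ _ H s1 s2)).
Qed.

Lemma FP_sheaf : is_sheaf FP.
Proof.
split; first exact: FP_top.
move=> U hU.
split.
  by move=> f g hf efg M hM psi1 psi2 H s1 s2;
    apply: (fns_ext (prev_sheaf hM) (hU M hM _ _ H s1 s2) (hf M hM _ _ H s1 s2)) => x Ux; rewrite efg.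
split.
  by move=> c M hM psi1 psi2 H s1 s2; apply: (fns_cst (prev_sheaf hM) c (hU M hM _ _ H s1 s2)).
split.
  move=> f g hf hg; split => M hM psi1 psi2 H s1 s2.
    exact: (fns_add (prev_sheaf hM) (hU M hM _ _ H s1 s2) (hf M hM _ _ H s1 s2) (hg M hM _ _ H s1 s2)).
  exact: (fns_mul (prev_sheaf hM) (hU M hM _ _ H s1 s2) (hf M hM _ _ H s1 s2) (hg M hM _ _ H s1 s2)).
split.
  move=> c f hf M hM psi1 psi2 H s1 s2.
  exact: (fns_scale (prev_sheaf hM) c (hU M hM _ _ H s1 s2) (hf M hM _ _ H s1 s2)).
split.
  move=> U' hU' sU f hf M hM psi1 psi2 H s1 s2.
  apply: (fns_restr (prev_sheaf hM) (hU M hM _ _ H s1 s2) (hU' M hM _ _ H s1 s2) _ (hf M hM _ _ H s1 s2)).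
  by move=> x; apply: sU.
move=> f hf M hM psi1 psi2 H s1 s2.
apply: (fns_glue (prev_sheaf hM) (hU M hM _ _ H s1 s2)) => m Um.
have [W [hW [Wm [WU hfW]]]] := hf _ Um.
exists (pairf H @^-1` W); split => //.
- exact: (hW M hM _ _ H s1 s2).
- by move=> x; apply: WU.
- exact: (hfW M hM _ _ H s1 s2).
Qed.

Lemma FP_pr1 : smooth FP M1 (fun x : FC => (proj1_sig x).1).
Proof.
split; first by move=> Oo hO M hM psi1 psi2 H [s1 _] s2; exact: s1.
by move=> Oo g hO hg M hM psi1 psi2 H [_ s1] s2; exact: s1.
Qed.

Lemma FP_pr2 : smooth FP M2 (fun x : FC => (proj1_sig x).2).
Proof.
split; first by move=> Oo hO M hM psi1 psi2 H s1 [s2 _]; exact: s2.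
by move=> Oo g hO hg M hM psi1 psi2 H s1 [_ s2]; exact: s2.
Qed.

Lemma FP_univ (M : kspace K) (hM : prevariety T M) psi1 psi2
  (H : forall x, phi1 (psi1 x) = phi2 (psi2 x)) :
  smooth M M1 psi1 -> smooth M M2 psi2 -> smooth M FP (pairf H).
Proof.
move=> s1 s2; split.
  by move=> A hA; exact: (hA M hM _ _ H s1 s2).
by move=> A g hA hg; exact: (hg M hM _ _ H s1 s2).
Qed.

End Fib.

Section FibChart.
Variables (K : numFieldType) (T : taylor K) (hT : is_taylor T)
  (M1 M2 B : kspace K) (hM1 : prevariety T M1) (hM2 : prevariety T M2) (hB : prevariety T B)
  (phi1 : car M1 -> car B) (phi2 : car M2 -> car B)
  (hphi1 : smooth M1 B phi1) (hphi2 : smooth M2 B phi2).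
Variables (U1 : set (car M1)) (V1 : vectType K) (L1 : set V1) (h1 : sig U1 -> sig L1) (g1 : sig L1 -> sig U1)
  (hU1 : opn M1 U1) (lc1 : locally_closed (t_opn T V1) L1)
  (sh1 : smooth (induced_on M1 U1) (induced_on (tspace T V1) L1) h1)
  (sg1 : smooth (induced_on (tspace T V1) L1) (induced_on M1 U1) g1)
  (c1 : cancel h1 g1) (c1' : cancel g1 h1).
Variables (U2 : set (car M2)) (V2 : vectType K) (L2 : set V2) (h2 : sig U2 -> sig L2) (g2 : sig L2 -> sig U2)
  (hU2 : opn M2 U2) (lc2 : locally_closed (t_opn T V2) L2)
  (sh2 : smooth (induced_on M2 U2) (induced_on (tspace T V2) L2) h2)
  (sg2 : smooth (induced_on (tspace T V2) L2) (induced_on M2 U2) g2)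
  (c2 : cancel h2 g2) (c2' : cancel g2 h2).
Variables (UB : set (car B)) (VB : vectType K) (LB : set VB) (hb : sig UB -> sig LB) (gb : sig LB -> sig UB)
  (hUB : opn B UB)
  (shb : smooth (induced_on B UB) (induced_on (tspace T VB) LB) hb)
  (cb : cancel hb gb).

Let hM1s := prev_sheaf hM1.
Let hM2s := prev_sheaf hM2.
Let hBs := prev_sheaf hB.

Definition gv1 (a : V1) (H : L1 a) : car M1 := proj1_sig (g1 (exist L1 a H)).
Definition gv2 (a : V2) (H : L2 a) : car M2 := proj1_sig (g2 (exist L2 a H)).

Lemma gv1_irr a (H H' : L1 a) : gv1 H = gv1 H'.
Proof. by rewrite (Prop_irrelevance H H'). Qed.
Lemma gv2_irr a (H H' : L2 a) : gv2 H = gv2 H'.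
Proof. by rewrite (Prop_irrelevance H H'). Qed.

Definition Sset : set (V1 * V2)%type := fun ab =>
  exists (H1 : L1 ab.1) (H2 : L2 ab.2), UB (phi1 (gv1 H1)) /\ phi1 (gv1 H1) = phi2 (gv2 H2).

Lemma lift1_smooth (Z : set (V1 * V2)%type) (hZ : forall ab, Z ab -> L1 ab.1) :
  smooth (induced_on (tspace T (V1 * V2)%type) Z) M1 (fun y => gv1 (hZ _ (proj2_sig y))).
Proof.
have sa := @smooth_restr K (tspace T (V1 * V2)%type) (tspace T V1) Z _ (smooth_fst hT V1 V2).
have sb := @smooth_corestr K (induced_on (tspace T (V1 * V2)%type) Z) (tspace T V1) L1 (fun y => (proj1_sig y).1) (fun y => hZ _ (proj2_sig y)) (@ind_sheaf K (tspace T (V1 * V2)%type) Z (tsheaf hT _)) sa.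
exact: (smooth_comp (smooth_comp sb sg1) (smooth_val U1)).
Qed.

Lemma lift2_smooth (Z : set (V1 * V2)%type) (hZ : forall ab, Z ab -> L2 ab.2) :
  smooth (induced_on (tspace T (V1 * V2)%type) Z) M2 (fun y => gv2 (hZ _ (proj2_sig y))).
Proof.
have sa := @smooth_restr K (tspace T (V1 * V2)%type) (tspace T V2) Z _ (smooth_snd hT V1 V2).
have sb := @smooth_corestr K (induced_on (tspace T (V1 * V2)%type) Z) (tspace T V2) L2 (fun y => (proj1_sig y).2) (fun y => hZ _ (proj2_sig y)) (@ind_sheaf K (tspace T (V1 * V2)%type) Z (tsheaf hT _)) sa.
exact: (smooth_comp (smooth_comp sb sg2) (smooth_val U2)).
Qed.

Lemma S_lc : locally_closed (t_opn T (V1 * V2)%type) Sset.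
Proof.
pose Y : set (V1 * V2)%type := fun ab => L1 ab.1 /\ L2 ab.2.
have lcY : locally_closed (t_opn T (V1 * V2)%type) Y := LC_prod hT lc1 lc2.
have hYp := LC_prevariety hT lcY.
have hYs := prev_sheaf hYp.
have tY := sheaf_top hYs.
have tV := ttop hT (V1 * V2)%type.
have sy1 := @lift1_smooth Y (fun ab H => proj1 H).
have sy2 := @lift2_smooth Y (fun ab H => proj2 H).
pose y1 := fun y : sig Y => gv1 (proj1 (proj2_sig y)).
pose y2 := fun y : sig Y => gv2 (proj2 (proj2_sig y)).
have sp1 := smooth_comp sy1 hphi1.
have sp2 := smooth_comp sy2 hphi2.
pose Q := fun y : sig Y => UB (phi1 (y1 y)) /\ UB (phi2 (y2 y)).
have hQ : opn (induced_on (tspace T (V1 * V2)%type) Y) Q := top_I tY (sp1.1 _ hUB) (sp2.1 _ hUB).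
pose F l (y : sig Y) := crd l (hvf hb (phi1 (y1 y))) - crd l (hvf hb (phi2 (y2 y))).
have hF : forall l, fns (induced_on (tspace T (V1 * V2)%type) Y) Q (F l).
  move=> l; have e := chart_coord hT hBs hUB shb l.
  have f1 := fns_restr hYs (sp1.1 _ hUB) hQ (fun y H => proj1 H) (sp1.2 _ _ hUB e).
  have f2 := fns_restr hYs (sp2.1 _ hUB) hQ (fun y H => proj2 H) (sp2.2 _ _ hUB e).
  exact: (fns_sub hYs hQ f1 f2).
pose E := fun y : sig Y => Q y /\ phi1 (y1 y) <> phi2 (y2 y).
have hE : opn (induced_on (tspace T (V1 * V2)%type) Y) E.
  have -> : E = \bigcup_l (Q `&` [set y | F l y != 0]).
    apply/seteqP; split => y.
      case=> -[Q1 Q2] ne.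
      have [l Hl] := coord_neq (fun e => ne (chart_inj cb Q1 Q2 e)).
      by exists l.
    case=> l _ [Qy Fy]; split => // e; move: Fy; by rewrite /F /= e subrr eqxx.
  apply: (top_Ui tY) => l; exact: (nz_open hT hYp hQ (hF l)).
have [ OQ [hOQ eQ]] := hQ.
have [ OE [hOE eE]] := hE.
have [ OY [CY [hOY hCY eY]]] := lcY.
exists (OQ `&` OY), (CY `&` ~` OE); split.
- exact: top_I.
- rewrite /closed_in setCI setCK; exact: top_UU.
apply/funext => ab; apply/propext; split.
  case=> H1 [H2 [UBx ex]].
  have Yab : Y ab := conj H1 H2.
  have ey1 : y1 (exist Y ab Yab) = gv1 H1 by apply: gv1_irr.
  have ey2 : y2 (exist Y ab Yab) = gv2 H2 by apply: gv2_irr.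
  have Qy : Q (exist Y ab Yab) by split; [rewrite ey1 | rewrite ey2 -ex].
  have := congr1 (fun P => P ab) eY; rewrite /= => eYab.
  have [OYab CYab] : OY ab /\ CY ab by rewrite -eYab.
  split; split => //.
    by have := congr1 (fun P => P (exist Y ab Yab)) eQ => /= <-.
  move=> OEab.
  have := congr1 (fun P => P (exist Y ab Yab)) eE => /=; rewrite -/(E _) => eEab.
  have : E (exist Y ab Yab) by rewrite eEab.
  by case=> _; rewrite ey1 ey2.
case=> -[OQab OYab] [CYab nOE].
have Yab : Y ab by have := congr1 (fun P => P ab) eY => /= ->.
have Qy : Q (exist Y ab Yab).
  by have := congr1 (fun P => P (exist Y ab Yab)) eQ => /= ->.
have nE : ~ E (exist Y ab Yab).
  by have := congr1 (fun P => P (exist Y ab Yab)) eE => /= ->.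
exists (proj1 Yab), (proj2 Yab); split; first exact: Qy.1.
by apply: contrapT => ne; apply: nE.
Qed.

Lemma chart_lin (M : kspace K) (hMs : is_sheaf M) (Ua : set (car M)) (hUa : opn M Ua)
  (V : vectType K) (L : set V) (h : sig Ua -> sig L)
  (hh : smooth (induced_on M Ua) (induced_on (tspace T V) L) h) (chi : V -> K) :
  lin_fun chi -> fns M Ua (fun y => chi (hvf h y)).
Proof.
move=> hl; have := chart_fns hMs hUa hh (top_T (ttop hT V)) (tlin hT hl).
apply: fns_congr => //.
by apply/seteqP; split => y // [].
Qed.

Let P := FP T phi1 phi2.

Definition Dset : set (FC phi1 phi2) := fun z =>
  U1 (proj1_sig z).1 /\ U2 (proj1_sig z).2 /\ UB (phi1 (proj1_sig z).1).

Lemma D_pre_open (M : kspace K) (hM : prevariety T M) psi1 psi2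
  (H : forall x, phi1 (psi1 x) = phi2 (psi2 x)) :
  smooth M M1 psi1 -> smooth M M2 psi2 -> opn M (pairf H @^-1` Dset).
Proof.
move=> s1 s2; have tM := sheaf_top (prev_sheaf hM).
apply: (top_I tM (s1.1 _ hU1)); apply: (top_I tM (s2.1 _ hU2)).
exact: ((smooth_comp s1 hphi1).1 _ hUB).
Qed.

Lemma D_open : opn P Dset.
Proof. by move=> M hM psi1 psi2 H s1 s2; exact: D_pre_open. Qed.

Definition qmap (z : FC phi1 phi2) : (V1 * V2)%type := (hvf h1 (proj1_sig z).1, hvf h2 (proj1_sig z).2).

Lemma q_lin_fns (M : kspace K) (hM : prevariety T M) psi1 psi2
  (H : forall x, phi1 (psi1 x) = phi2 (psi2 x)) (s1 : smooth M M1 psi1) (s2 : smooth M M2 psi2)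
  (chi : (V1 * V2)%type -> K) :
  lin_fun chi -> fns M (pairf H @^-1` Dset) (fun m => chi (qmap (pairf H m))).
Proof.
move=> hchi; have hMs := prev_sheaf hM.
have hUM := D_pre_open hM H s1 s2.
pose chi1 := fun a : V1 => chi (a, 0).
pose chi2 := fun b : V2 => chi (0, b).
have l1 : lin_fun chi1 by move=> c u v; rewrite /chi1 pair_lin1 hchi.
have l2 : lin_fun chi2 by move=> c u v; rewrite /chi2 pair_lin2 hchi.
have e1 := chart_lin hM1s hU1 sh1 l1.
have e2 := chart_lin hM2s hU2 sh2 l2.
have f1 := fns_restr hMs (s1.1 _ hU1) hUM (fun m H => proj1 H) (s1.2 _ _ hU1 e1).
have f2 := fns_restr hMs (s2.1 _ hU2) hUM (fun m H => proj1 (proj2 H)) (s2.2 _ _ hU2 e2).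
apply: (fns_ext hMs hUM (fns_add hMs hUM f1 f2)) => m _.
by rewrite /qmap /= pair_dec (linD _ _ hchi).
Qed.

Lemma smooth_q : smooth (induced_on P Dset) (tspace T (V1 * V2)%type) (fun d => qmap (proj1_sig d)).
Proof.
have hA : forall Oo, opn (tspace T (V1 * V2)%type) Oo -> opn P (Dset `&` qmap @^-1` Oo).
  move=> Oo hO M hM psi1 psi2 H s1 s2.
  exact: (key_open hT hM (D_pre_open hM H s1 s2) (q_lin_fns hM H s1 s2) hO).
have eA : forall Oo, (fun d : sig Dset => (Dset `&` qmap @^-1` Oo) (proj1_sig d)) =
                    (fun d => qmap (proj1_sig d)) @^-1` Oo.
  move=> Oo; apply/funext => -[z Dz]; apply/propext; split => /=; first by case.
  by move=> H; split.
split.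
  move=> Oo hO; exists (Dset `&` qmap @^-1` Oo); split; first exact: hA.
  by rewrite eA.
move=> Oo F hO hF.
have hfA : fns P (Dset `&` qmap @^-1` Oo) (fun z => F (qmap z)).
  move=> M hM psi1 psi2 H s1 s2.
  exact: (key_fns hT hM (D_pre_open hM H s1 s2) (q_lin_fns hM H s1 s2) hO hF).
have := @ind_fns K P Dset _ _ (hA _ hO) hfA.
by apply: fns_congr.
Qed.

Lemma hvf1_L x : U1 x -> L1 (hvf h1 x).
Proof. by move=> Ux; rewrite /hvf (extfE _ _ Ux); exact: proj2_sig. Qed.
Lemma hvf2_L x : U2 x -> L2 (hvf h2 x).
Proof. by move=> Ux; rewrite /hvf (extfE _ _ Ux); exact: proj2_sig. Qed.

Lemma gv1_hvf x (Ux : U1 x) (H : L1 (hvf h1 x)) : gv1 H = x.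
Proof.
rewrite /gv1; have -> : exist L1 (hvf h1 x) H = h1 (exist U1 x Ux).
  by apply: sig_eq; rewrite /= /hvf (extfE _ _ Ux).
by rewrite c1.
Qed.
Lemma gv2_hvf x (Ux : U2 x) (H : L2 (hvf h2 x)) : gv2 H = x.
Proof.
rewrite /gv2; have -> : exist L2 (hvf h2 x) H = h2 (exist U2 x Ux).
  by apply: sig_eq; rewrite /= /hvf (extfE _ _ Ux).
by rewrite c2.
Qed.

Lemma hvf_gv1 a (H : L1 a) : hvf h1 (gv1 H) = a.
Proof.
rewrite /gv1 /hvf (extfE _ _ (proj2_sig (g1 (exist L1 a H)))).
have -> : exist U1 (proj1_sig (g1 (exist L1 a H))) (proj2_sig (g1 (exist L1 a H))) = g1 (exist L1 a H).
  exact: sig_eq.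
by rewrite c1'.
Qed.
Lemma hvf_gv2 a (H : L2 a) : hvf h2 (gv2 H) = a.
Proof.
rewrite /gv2 /hvf (extfE _ _ (proj2_sig (g2 (exist L2 a H)))).
have -> : exist U2 (proj1_sig (g2 (exist L2 a H))) (proj2_sig (g2 (exist L2 a H))) = g2 (exist L2 a H).
  exact: sig_eq.
by rewrite c2'.
Qed.

Lemma qS (d : sig Dset) : Sset (qmap (proj1_sig d)).
Proof.
case: d => z [U1z [U2z UBz]].
exists (hvf1_L U1z), (hvf2_L U2z).
rewrite /= (gv1_hvf U1z) (gv2_hvf U2z); split => //; exact: proj2_sig z.
Qed.

Definition cmap (d : sig Dset) : sig Sset := exist Sset (qmap (proj1_sig d)) (qS d).

Lemma smooth_c : smooth (induced_on P Dset) (induced_on (tspace T (V1 * V2)%type) Sset) cmap.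
Proof. exact: (@smooth_corestr K (induced_on P Dset) (tspace T (V1 * V2)%type) Sset (fun d => qmap (proj1_sig d)) qS (@ind_sheaf K P Dset (FP_sheaf T phi1 phi2)) smooth_q). Qed.

Lemma S1 ab : Sset ab -> L1 ab.1. Proof. by case. Qed.
Lemma S2 ab : Sset ab -> L2 ab.2. Proof. by case=> H1 [H2 _]. Qed.

Definition psS1 (s : sig Sset) : car M1 := gv1 (S1 (proj2_sig s)).
Definition psS2 (s : sig Sset) : car M2 := gv2 (S2 (proj2_sig s)).

Lemma HS s : phi1 (psS1 s) = phi2 (psS2 s).
Proof.
rewrite /psS1 /psS2; have [H1 [H2 [_ e]]] := proj2_sig s.
by rewrite (gv1_irr _ H1) (gv2_irr _ H2).
Qed.

Definition pS : sig Sset -> FC phi1 phi2 :=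
  @pairf K M1 M2 B phi1 phi2 (induced_on (tspace T (V1 * V2)%type) Sset) psS1 psS2 HS.

Lemma pSD s : Dset (pS s).
Proof.
split; first exact: proj2_sig.
split; first exact: proj2_sig.
rewrite /= /psS1; have [H1 [H2 [UBx _]]] := proj2_sig s.
by rewrite (gv1_irr _ H1).
Qed.

Definition c'map (s : sig Sset) : sig Dset := exist Dset (pS s) (pSD s).

Lemma smooth_c' : smooth (induced_on (tspace T (V1 * V2)%type) Sset) (induced_on P Dset) c'map.
Proof.
have hSp := LC_prevariety hT S_lc.
have u : smooth (induced_on (tspace T (V1 * V2)%type) Sset) P pS :=
  FP_univ hSp HS (@lift1_smooth Sset S1) (@lift2_smooth Sset S2).
exact: (@smooth_corestr K (induced_on (tspace T (V1 * V2)%type) Sset) P Dset pS pSD (prev_sheaf hSp) u).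
Qed.

Lemma c_c' : cancel cmap c'map.
Proof.
case=> z [U1z [U2z UBz]]; apply: sig_eq; apply: sig_eq => /=.
rewrite /psS1 /psS2 /= (gv1_hvf U1z) (gv2_hvf U2z).
by case: (proj1_sig z).
Qed.

Lemma c'_c : cancel c'map cmap.
Proof.
case=> ab Sab; apply: sig_eq => /=.
rewrite /qmap /= /psS1 /psS2 hvf_gv1 hvf_gv2.
by rewrite -surjective_pairing.
Qed.

Lemma fib_chart : exists (V : vectType K) (L : set V),
  locally_closed (t_opn T V) L /\ iso (induced_on P Dset) (induced_on (tspace T V) L).
Proof.
exists (V1 * V2)%type, Sset; split; first exact: S_lc.
exists cmap, c'map; split.
- exact: smooth_c.
- exact: smooth_c'.
- exact: c_c'.
- exact: c'_c.
Qed.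

End FibChart.

Lemma part3 (K : numFieldType) (T : taylor K) (hT : is_taylor T)
  (M1 M2 B : kspace K) (hM1 : prevariety T M1) (hM2 : prevariety T M2) (hB : prevariety T B)
  (phi1 : car M1 -> car B) (phi2 : car M2 -> car B)
  (hphi1 : smooth M1 B phi1) (hphi2 : smooth M2 B phi2) :
  exists o f, is_fibre_product T phi1 phi2 o f.
Proof.
exists (@fo K T M1 M2 B phi1 phi2), (@ff K T M1 M2 B phi1 phi2).
split.
- split; first exact: (FP_sheaf T phi1 phi2).
  have [_ [ I1 [e1 [Uc1 [inj1 op1 cov1 ch1]]]]] := hM1.
  have [_ [ I2 [e2 [Uc2 [inj2 op2 cov2 ch2]]]]] := hM2.
  have [_ [ IB [eB [UcB [injB opB covB chB]]]]] := hB.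
  exists (I1 * I2 * IB)%type, (fun i => pickle (e1 i.1.1, e2 i.1.2, eB i.2)),
    (fun i => Dset (phi1:=phi1) (phi2:=phi2) (Uc1 i.1.1) (Uc2 i.1.2) (UcB i.2)); split.
  + move=> [[a b] c] [[a' b'] c'] /(pcan_inj pickleK) [] /inj1 -> /inj2 -> /injB -> //.
  + move=> [[a b] c]; exact: (D_open hphi1 (op1 a) (op2 b) (opB c)).
  + apply/seteqP; split => z // _.
    have : (\bigcup_i Uc1 i) (proj1_sig z).1 by rewrite cov1.
    case=> a _ Ua.
    have : (\bigcup_i Uc2 i) (proj1_sig z).2 by rewrite cov2.
    case=> b _ Ub.
    have : (\bigcup_i UcB i) (phi1 (proj1_sig z).1) by rewrite covB.
    case=> c _ Uc.
    by exists (a, b, c).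
  + move=> [[a b] c] /=.
    have [V1 [L1 [lc1 [h1 [g1 [sh1 sg1 c1 c1']]]]]] := ch1 a.
    have [V2 [L2 [lc2 [h2 [g2 [sh2 sg2 c2 c2']]]]]] := ch2 b.
    have [VB [LB [lcB [hb [gb [shb sgb cb cb']]]]]] := chB c.
    exact: (fib_chart hT hM1 hM2 hB hphi1 hphi2 (op1 a) lc1 sh1 sg1 c1 c1'
              (op2 b) lc2 sh2 sg2 c2 c2' (opB c) shb cb).
- exact: (FP_pr1 T phi1 phi2).
- exact: (FP_pr2 T phi1 phi2).
move=> M hM psi1 psi2 H s1 s2; exact: (FP_univ hM H s1 s2).
Qed.

Unset Implicit Arguments.

Theorem lemma3p6p14 (R : realType) (b : bool)
  (T : taylor (Kfield R b)) (hT : is_taylor T)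
  (M1 M2 B : kspace (Kfield R b))
  (hM1 : prevariety T M1) (hM2 : prevariety T M2) (hB : prevariety T B)
  (phi1 : car M1 -> car B) (phi2 : car M2 -> car B)
  (hphi1 : smooth M1 B phi1) (hphi2 : smooth M2 B phi2) :
  (forall o f, is_product T B B o f -> locally_closed o (diagK (car B))) /\
  (forall (V : vectType (Kfield R b)) (L : set V),
     locally_closed (t_opn T V) L ->
     forall o f, is_product T (induced_on (tspace T V) L) (induced_on (tspace T V) L) o f ->
       closed_in o (diagK (car (induced_on (tspace T V) L)))) /\
  (exists o f, is_fibre_product T phi1 phi2 o f).
Proof.
split; first by move=> o f hp; exact: (part1 hT hB hp).
split; first by move=> V L lc o f hp; exact: (part2 hT lc hp).
exact: (part3 hT hM1 hM2 hB hphi1 hphi2).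
Qed.
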